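(* For every $n\ge 1$, the number $b_n$ of distinct complete lines of play of Planted Brussels Sprouts whose initial state has $n$ arms is $b_n=n^{n-2}$.
   Context: Planted Brussels Sprouts of order $n$: start with a closed disk with $n$ marked points on its boundary circle, labeled $1,\dots,n$ in clockwise order. Attached to each marked point is an arm, a short segment pointing into the interior of the disk; these arms are free. A move consists of two steps. First, choose two free arms and join their free ends by a simple curve (an arc) in the disk that does not intersect any previously drawn arc or arm; the two joined arms cease to be free. Second, mark a point (a notch) on the arc, from which two new free arms emanate, one on each side of the arc. The game ends when no move is possible. A (complete) line of play is the sequence of moves from the initial state to the end of the game. Long labels: the original arm at point $i$ has long label $i$. If an arc joins arms with long labels $\alpha$ and $\beta$, the two new arms receive long labels $(\alpha,\beta)$ and $(\beta,\alpha)$, placed so that, going clockwise around the notch, one sees the old arm $\alpha$, the new arm $(\alpha,\beta)$, the old arm $\beta$, and the new arm $(\beta,\alpha)$. Two lines of play are considered the same iff for every $k$ the two arms joined at the $k$-th move have the same long labels in both. Otherwise they are distinct. *)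

(* Defs.v *)
From HB Require Import structures.
From mathcomp Require Import all_boot.
From mathcomp Require Import finmap.

Set Implicit Arguments.
Unset Strict Implicit.
Unset Printing Implicit Defensive.

(* Long labels: [Arm i] is the original arm at marked point i; joining arms
   with long labels a and b creates arms [New a b] = (a,b) and [New b a] = (b,a). *)
Inductive label : Type :=
  | Arm of nat
  | New of label & label.

Fixpoint label_enc (l : label) : GenTree.tree nat :=
  match l with
  | Arm i => GenTree.Leaf i
  | New a b => GenTree.Node 0 [:: label_enc a; label_enc b]
  end.

Fixpoint label_dec (t : GenTree.tree nat) : option label :=
  match t with
  | GenTree.Leaf i => Some (Arm i)
  | GenTree.Node _ [:: ta; tb] =>
      match label_dec ta, label_dec tb with
      | Some a, Some b => Some (New a b)
      | _, _ => None
      end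
  | GenTree.Node _ _ => None
  end.

Lemma label_encK : pcancel label_enc label_dec.
Proof. by elim=> [i|a IHa b IHb] //=; rewrite IHa IHb. Qed.

HB.instance Definition _ := Countable.copy label (pcan_type label_encK).

(* A state of the game: the list of regions (faces) of the disk; each region
   is recorded by the cyclic (clockwise) sequence of the free arms lying in
   it.  Each region is a topological disk, so any two free arms of a region
   can be joined, and the arc is unique up to isotopy. *)
Definition state := seq (seq label).

Definition init_state (n : nat) : state := [:: [seq Arm i | i <- iota 1 n]].

(* If the region reads (cyclically, clockwise) a, X, b, Y, the
   arc a--b splits it into the region with cyclic arm sequence (a,b), X and
   the region with cyclic arm sequence (b,a), Y (orientation convention of
   the long labels: clockwise around the notch a, (a,b), b, (b,a)). *)
Definition step (st : state) (m : {fset label}) (st' : state) : Prop :=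
  exists (pre post : state) (r : seq label) (a b : label) (X Y : seq label) (k : nat),
    [/\ st = pre ++ r :: post,
        rot k r = a :: X ++ b :: Y,
        a != b,
        m = [fset a; b]%fset &
        st' = pre ++ [:: New a b :: X; New b a :: Y] ++ post].

Definition terminal (st : state) : Prop :=
  forall m st', ~ step st m st'.

Fixpoint line_from (st : state) (l : seq {fset label}) : Prop :=
  match l with
  | [::] => terminal st
  | m :: l' => exists st', step st m st' /\ line_from st' l'
  end.

Definition complete_line (n : nat) (l : seq {fset label}) : Prop :=
  line_from (init_state n) l.

(* Main.v *)
Require Import Defs.
From HB Require Import structures.
From mathcomp Require Import all_boot.
From mathcomp Require Import finmap.
From mathcomp Require Import all_algebra.
From mathcomp Require Import zify ring.
Import GRing.Theory Num.Theory.

Section Abel.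
Local Open Scope ring_scope.

Definition cp (j : nat) (c : rat) : {poly rat} :=
  if j is j'.+1 then ('X + c%:P) * ('X + (c + j%:R)%:P) ^+ j' else 1.

Lemma aux_ring (R : comNzRingType) (X C W : R) (j : nat) :
  (X + (C + j.+2%:R)) * W + (X + C) * (W *+ j.+1) = ((X + (C + 1)) * W) *+ j.+2.
Proof.
rewrite -[W *+ _]mulr_natr -[(_ * W) *+ _]mulr_natr.
rewrite -[j.+2%:R]natr1 -[j.+1%:R]natr1. ring.
Qed.

Lemma cp_deriv j c : (cp j.+1 c)^`() = (cp j (c+1)) *+ j.+1.
Proof.
case: j => [|j].
  by rewrite /cp expr0 mulr1 derivD derivX derivC addr0.
rewrite [cp j.+2 c]/cp [cp j.+1 _]/cp.
rewrite derivM derivD derivX derivC addr0 mul1r deriv_exp derivD derivX derivC addr0 mul1r.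
rewrite [j.+1.-1]/= -[c + 1 + _]addrA nat1r exprS.
have E : (c + j.+2%:R)%:P = c%:P + (j.+2)%:R :> {poly rat} by rewrite polyCD polyC_natr.
have E1 : (c + 1)%:P = c%:P + 1 :> {poly rat} by rewrite polyCD polyC1.
rewrite E E1. move: (_ ^+ j) => W.
exact: aux_ring.
Qed.

Lemma deriv_sum (I : Type) (r : seq I) (P : pred I) (F : I -> {poly rat}) :
  (\sum_(i <- r | P i) F i)^`() = \sum_(i <- r | P i) (F i)^`().
Proof. exact: (big_morph _ (@derivD _) (@deriv0 _)). Qed.

Lemma deriv0_const (p : {poly rat}) : p^`() = 0 -> p = (p`_0)%:P.
Proof.
move=> H; apply/polyP => i; rewrite coefC.
case: i => [//|i].
have : (p^`())`_i = 0 by rewrite H coef0.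
by rewrite coef_deriv => /eqP; rewrite -mulr_natr mulf_eq0 pnatr_eq0 orbF => /eqP.
Qed.

Lemma abel m : forall c y : rat,
  \sum_(j < m.+1) cp j c * ('C(m, j)%:R * (y + (m - j)%:R) ^+ (m - j))%:P
  = ('X + (c + y + m%:R)%:P) ^+ m.
Proof.
elim: m => [|m IH] c y.
  by rewrite big_ord_recl big_ord0 addr0 bin0 subn0 !expr0 mulr1 mul1r.
set L := \sum_(j < _) _.
suff : L - ('X + (c + y + m.+1%:R)%:P) ^+ m.+1 = 0 by move/eqP; rewrite subr_eq0 => /eqP.
set D := L - _.
have HD : D^`() = 0.
  rewrite /D derivB /L deriv_sum big_ord_recl derivM !derivC mul0r mulr0 !add0r.
  rewrite deriv_exp derivD derivX derivC addr0 mul1r [m.+1.-1]/=.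
  have -> : c + y + m.+1%:R = (c + 1) + y + m%:R.
    by rewrite -!addrA -nat1r [1 + (y + _)]addrCA.
  rewrite -(IH (c+1) y) -[_ *+ m.+1]mulr_natl mulr_sumr; apply/eqP; rewrite subr_eq0; apply/eqP/eq_bigr => i _.
  rewrite derivM derivC mulr0 addr0 [val (lift _ _)]/= /bump add1n cp_deriv subSS.
  rewrite -[cp i (c+1) *+ i.+1]mulr_natr -mulrA [RHS]mulrCA; congr (_ * _).
  rewrite -!polyC_natr -!polyCM; congr (_%:P).
  by rewrite !mulrA -!natrM -mul_bin_diag.
have E := deriv0_const _ HD.
rewrite E; suff -> : D`_0 = 0 by [].
rewrite -(hornerC (D`_0) (-c)) -E /D /L hornerD hornerN horner_sum big_ord_recl big1.
  rewrite addr0 hornerM [cp _ _]/= hornerC hornerE mul1r hornerC subn0.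
  by rewrite horner_exp hornerD hornerX hornerC !addrA addNr add0r subrr.
move=> i _; rewrite [val (lift _ _)]/= /bump add1n /cp.
by rewrite hornerM hornerC hornerM hornerD hornerX hornerC addNr !mul0r.
Qed.

Definition g (k : nat) : rat := (k ^ k.-1)%:R / (k`!)%:R.
Definition e (j : nat) : rat := (j.+1 ^ j.-1)%:R.

Lemma cp_at1 j : (cp j 0).[1] = e j.
Proof.
rewrite /e; case: j => [|j]; first by rewrite hornerE.
rewrite /cp hornerM horner_exp !hornerD hornerX !hornerC add0r addr0 mul1r.
by rewrite nat1r natrX.
Qed.

Lemma abel1 m :
  \sum_(j < m.+1) e j * 'C(m, j)%:R * ((m - j) ^ (m - j))%:R = (m.+1 ^ m)%:R.
Proof.
have := congr1 (fun p => p.[1]) (abel m 0 0).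
rewrite horner_sum /= horner_exp hornerD hornerX hornerC !add0r natrX nat1r => <-.
apply: eq_bigr => j _; rewrite hornerM hornerC cp_at1 add0r natrX mulrA //.
Qed.

Lemma term_id m j : (j < m)%N ->
  (m - j)%:R * g j.+1 * g (m - j) = e j * 'C(m, j)%:R * ((m - j) ^ (m - j))%:R / m`!%:R.
Proof.
move=> ljm; have [b ->] : exists b, m = (j + b.+1)%N by exists (m - j.+1)%N; rewrite addnS -addSn subnKC.
rewrite addKn /g /e.
have Hf := bin_fact (leq_addr b.+1 j); rewrite addKn in Hf.
rewrite -Hf.
have Hj : (j.+1 ^ j = j.+1 * j.+1 ^ j.-1)%N by case: j {Hf ljm} => [|j] //; rewrite expnS.
rewrite [j.+1.-1]/= Hj [b.+1.-1]/= expnS factS !natrM.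
have h1 : (j.+1%:R : rat) != 0 by rewrite pnatr_eq0.
have h2 : (j`!%:R : rat) != 0 by rewrite pnatr_eq0 -lt0n fact_gt0.
have h3 : (b.+1`!%:R : rat) != 0 by rewrite pnatr_eq0 -lt0n fact_gt0.
have h4 : ('C(j + b.+1, j)%:R : rat) != 0 by rewrite pnatr_eq0 -lt0n bin_gt0 leq_addr.
have h5 : (b.+1%:R : rat) != 0 by rewrite pnatr_eq0.
have h6 : (b`!%:R : rat) != 0 by rewrite pnatr_eq0 -lt0n fact_gt0.
field. apply/and5P; split => //; by rewrite nat1r pnatr_eq0.
Qed.

Lemma gsum m : \sum_(j < m) (m - j)%:R * g j.+1 * g (m - j) = m%:R * g m.+1.
Proof.
rewrite (eq_bigr (fun j : 'I_m => e j * 'C(m, j)%:R * ((m - j) ^ (m - j))%:R / m`!%:R));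
  last by move=> j _; rewrite term_id.
rewrite -mulr_suml.
have := abel1 m; rewrite big_ord_recr /= subnn expn0 binn mulr1 mulr1 => H.
have -> : \sum_(i < m) e i * 'C(m, i)%:R * ((m - i) ^ (m - i))%:R = (m.+1 ^ m)%:R - e m.
  by rewrite -H addrK.
rewrite /g /e; case: m {H} => [|m]; first by rewrite subrr !mul0r.
rewrite [m.+1.-1]/= [m.+2.-1]/= expnS factS !natrM.
have h1 : (m.+2%:R : rat) != 0 by rewrite pnatr_eq0.
have h2 : (m.+1`!%:R : rat) != 0 by rewrite pnatr_eq0 -lt0n fact_gt0.
rewrite -!natr1 in h1 *.
field. rewrite !natr1 !pnatr_eq0 -lt0n fact_gt0 //.
Qed.

End Abel.

Set Implicit Arguments.
Unset Strict Implicit.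
Unset Printing Implicit Defensive.



Fixpoint sub (u v : label) : bool :=
  match v with Arm _ => false | New a b => [|| u == a, u == b, sub u a | sub u b] end.
Fixpoint lsize (l : label) : nat :=
  match l with Arm _ => 1 | New a b => (lsize a + lsize b).+1 end.

Lemma sub_size u v : sub u v -> lsize u < lsize v.
Proof.
elim: v => [//|a IHa b IHb] /=.
case/or4P => [/eqP->|/eqP->|/IHa|/IHb]; lia.
Qed.

Lemma sub_trans u v w : sub u v -> sub v w -> sub u w.
Proof.
move=> Huv; elim: w => [//|c IHc d IHd] /=.
case/or4P => [/eqP<-|/eqP<-|/IHc->|/IHd->]; rewrite ?Huv ?orbT //.
Qed.

Lemma sub_New_l a b : sub a (New a b).
Proof. by rewrite /= eqxx. Qed.
Lemma sub_New_r a b : sub b (New a b).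
Proof. by rewrite /= eqxx orbT. Qed.

Definition WF (st : state) :=
  uniq (flatten st) /\ forall u v, u \in flatten st -> v \in flatten st -> ~~ sub u v.

Definition mu (st : state) := \sum_(r <- st) (size r).-1.

Lemma step_perm st m st' : step st m st' ->
  exists pre post r a b X Y k, [/\ st = pre ++ r :: post, rot k r = a :: X ++ b :: Y,
     a != b, m = [fset a; b]%fset & st' = pre ++ [:: New a b :: X; New b a :: Y] ++ post].
Proof. by []. Qed.

Lemma step_flat pre post (r : seq label) a b X Y k :
  rot k r = a :: X ++ b :: Y ->
  perm_eq (flatten (pre ++ r :: post)) (a :: b :: (flatten pre ++ X ++ Y ++ flatten post)) /\
  perm_eq (flatten (pre ++ [:: New a b :: X; New b a :: Y] ++ post))
     (New a b :: New b a :: (flatten pre ++ X ++ Y ++ flatten post)).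
Proof.
move=> Hr.
have Pr : perm_eq (rot k r) r by rewrite perm_rot.
have Hc : forall p, count p r = count p (a :: X ++ b :: Y) by move=> p; rewrite -Hr (permP Pr).
split; apply/permP => p; rewrite !flatten_cat /= ?Hc /= !count_cat /= ?Hc /= ?count_cat /=; move: (nat_of_bool (p a)) (nat_of_bool (p b)) (nat_of_bool (p (New a b))) (nat_of_bool (p (New b a))) => ? ? ? ?; rewrite ?cats0; lia.
Qed.

Lemma step_WF st m st' : WF st -> step st m st' -> WF st'.
Proof.
case=> Hu Hs [pre [post [r [a [b [X [Y [k [E Hr Hab Hm E']]]]]]]]].
have [P1 P2] := step_flat pre post Hr.
subst st st'.
set R := flatten pre ++ _ in P1 P2.
have Hm1 : forall x, x \in flatten (pre ++ r :: post) = (x \in a :: b :: R) by apply: perm_mem.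
have Hm2 : forall x, x \in flatten (pre ++ [:: New a b :: X; New b a :: Y] ++ post) = (x \in New a b :: New b a :: R) by apply: perm_mem.
have Hu' : uniq (a :: b :: R) by rewrite -(perm_uniq P1).
have HaR : a \notin R by move: Hu'; rewrite !cons_uniq inE negb_or => /andP [/andP [_ ->]].
have [HbR HR] : b \notin R /\ uniq R by move: Hu'; rewrite !cons_uniq => /andP [_ /andP [-> ->]].
have old : forall u v, u \in a :: b :: R -> v \in a :: b :: R -> ~~ sub u v.
  by move=> u v; rewrite -!Hm1; apply: Hs.
split.
  rewrite (perm_uniq P2) /= HR andbT inE negb_or -andbA; apply/and3P; split.
  - by apply/eqP => -[/eqP]; rewrite (negbTE Hab).
  - apply/negP => HN; have := old a (New a b); rewrite !inE eqxx sub_New_l /=.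
    by move=> /(_ isT); rewrite HN !orbT => /(_ isT).
  - apply/negP => HN; have := old b (New b a); rewrite !inE eqxx sub_New_l /=.
    by move=> /(_ (orbT _)); rewrite HN !orbT => /(_ isT).
move=> u v; rewrite !Hm2 !inE.
have Hnew : forall p q, (p == a) && (q == b) || (p == b) && (q == a) ->
  forall w, w \in R -> ~~ sub (New p q) w /\ ~~ sub w (New p q).
  move=> p q Hpq w Hw.
  have Hp : p \in a :: b :: R by case/orP: Hpq => /andP [/eqP -> _]; rewrite !inE eqxx ?orbT.
  have Hq : q \in a :: b :: R by case/orP: Hpq => /andP [_ /eqP ->]; rewrite !inE eqxx ?orbT.
  have Hw' : w \in a :: b :: R by rewrite !inE Hw !orbT.
  split.
    apply/negP => H; have := old p w Hp Hw'; by rewrite (sub_trans (sub_New_l p q) H).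
  rewrite /= negb_or; apply/andP; split.
    apply/negP => /eqP Ew; subst w.
    by move: Hw; case/orP: Hpq => /andP [/eqP -> _] H; move: HaR HbR; rewrite H ?orbT.
  rewrite negb_or; apply/andP; split.
    apply/negP => /eqP Ew; subst w.
    by move: Hw; case/orP: Hpq => /andP [_ /eqP ->] H; move: HaR HbR; rewrite H ?orbT.
  by rewrite negb_or (old w p Hw' Hp) (old w q Hw' Hq).
have Hab1 : (a == a) && (b == b) || (a == b) && (b == a) by rewrite !eqxx.
have Hba1 : (b == a) && (a == b) || (b == b) && (a == a) by rewrite !eqxx orbT.
have sz : forall p q, lsize (New p q) = lsize (New q p) by move=> p q /=; lia.
case/or3P => [/eqP->|/eqP->|Hu1]; case/or3P => [/eqP->|/eqP->|Hv1].
- by apply/negP => /sub_size; lia.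
- by apply/negP => /sub_size; rewrite sz; lia.
- by case: (Hnew _ _ Hab1 v Hv1).
- by apply/negP => /sub_size; rewrite sz; lia.
- by apply/negP => /sub_size; lia.
- by case: (Hnew _ _ Hba1 v Hv1).
- by case: (Hnew _ _ Hab1 u Hu1).
- by case: (Hnew _ _ Hba1 u Hu1).
- by apply: old; rewrite !inE ?Hu1 ?Hv1 !orbT.
Qed.

Lemma step_mu st m st' : step st m st' -> mu st = (mu st').+1.
Proof.
case=> [pre [post [r [a [b [X [Y [k [-> Hr _ _ ->]]]]]]]]].
rewrite /mu !big_cat !big_cons big_nil /=.
have : size r = (size X + size Y).+2 by rewrite -(size_rot k) Hr /= size_cat /= addnS.
move=> ->; lia.
Qed.

Lemma step_sim st1 st2 m st1' : perm_eq st1 st2 -> step st1 m st1' ->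
  exists st2', step st2 m st2' /\ perm_eq st1' st2'.
Proof.
move=> P [pre [post [r [a [b [X [Y [k [E Hr Hab Hm E']]]]]]]]].
have Hin : r \in st2 by rewrite -(perm_mem P) E mem_cat inE eqxx orbT.
move: P; case/splitPr: Hin => pre2 post2 P.
exists (pre2 ++ [:: New a b :: X; New b a :: Y] ++ post2); split.
  by exists pre2, post2, r, a, b, X, Y, k.
subst; apply/permP => p; move/permP: P => /(_ p); rewrite !count_cat /=.
move: (nat_of_bool (p r)) (nat_of_bool (p (New a b :: X))) (nat_of_bool (p (New b a :: Y))) => ? ? ?; lia.
Qed.

Lemma line_perm l : forall st1 st2, perm_eq st1 st2 -> line_from st1 l -> line_from st2 l.
Proof.
elim: l => [|m l IH] st1 st2 P /=.
  move=> T m' st' H.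
  have P' : perm_eq st2 st1 by rewrite perm_sym.
  by have [st'' [H' _]] := step_sim P' H; apply: T H'.
case=> st1' [H L]; have [st2' [H2 P2]] := step_sim P H.
by exists st2'; split => //; apply: IH P2 L.
Qed.

Lemma region_unique (x : label) pre r post pre' r' post' :
  uniq (flatten (pre ++ r :: post)) -> pre ++ r :: post = pre' ++ r' :: post' ->
  x \in r -> x \in r' -> [/\ pre = pre', r = r' & post = post'].
Proof.
elim: pre pre' => [|s pre IH] [|s' pre'] /=.
- by move=> _ [-> ->].
- move=> Hu [Er Ep] Hx Hx'; subst s' post.
  move: Hu; rewrite cat_uniq => /and3P [_ /hasPn H _].
  have : x \in flatten (pre' ++ r' :: post') by rewrite flatten_cat mem_cat /= mem_cat Hx' orbT.
  by move/H; rewrite Hx.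
- move=> Hu [Er Ep] Hx Hx'; subst s post'.
  move: Hu; rewrite cat_uniq => /and3P [_ /hasPn H _].
  have : x \in flatten (pre ++ r :: post) by rewrite flatten_cat mem_cat /= mem_cat Hx orbT.
  by move/H; rewrite Hx'.
- move=> Hu [Es E] Hx Hx'; subst s'.
  move: Hu; rewrite cat_uniq => /and3P [_ _ Hu].
  by have [-> -> ->] := IH pre' Hu E Hx Hx'.
Qed.

Lemma rot_head (s : seq label) k x t : uniq s -> rot k s = x :: t -> rot (index x s) s = x :: t.
Proof.
move=> Hu Hr.
case: (ltnP k (size s)) => Hk; last first.
  by move: Hr; rewrite rot_oversize // => ->; rewrite /= eqxx rot0.
have Hx : nth x s k = x.
  move: Hr; rewrite /rot (drop_nth x Hk) /= => -[]; done.
by rewrite -{1}Hx index_uniq.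
Qed.

Lemma split_first (b : label) X Y X' Y' : b \notin X -> b \notin X' ->
  X ++ b :: Y = X' ++ b :: Y' -> X = X' /\ Y = Y'.
Proof.
elim: X X' => [|x X IH] [|x' X'] //=.
- by move=> _ _ [->].
- by move=> _; rewrite inE negb_or => /andP [/eqP H _] [E]; rewrite E in H.
- by rewrite inE negb_or => /andP [/eqP H _] _ [E]; rewrite E in H.
- rewrite !inE !negb_or => /andP [_ H1] /andP [_ H2] [-> E].
  by have [-> ->] := IH X' H1 H2 E.
Qed.

Lemma step_det st m st1 st2 : WF st -> step st m st1 -> step st m st2 -> perm_eq st1 st2.
Proof.
case=> Hu _ [pre [post [r [a [b [X [Y [k [E Hr Hab Hm E1]]]]]]]]]
  [pre' [post' [r' [a' [b' [X' [Y' [k' [E' Hr' Hab' Hm' E2]]]]]]]]].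
have Hfs : [fset a; b]%fset = [fset a'; b']%fset by rewrite -Hm -Hm'.
have Har : a \in r by rewrite -(mem_rot k) Hr inE eqxx.
have Hbr : b \in r by rewrite -(mem_rot k) Hr inE mem_cat inE eqxx !orbT.
have Har' : a' \in r' by rewrite -(mem_rot k') Hr' inE eqxx.
have Hbr' : b' \in r' by rewrite -(mem_rot k') Hr' inE mem_cat inE eqxx !orbT.
have Ha : a = a' \/ a = b' by apply/fset2P; rewrite -Hfs fset21.
have Hb : b = a' \/ b = b' by apply/fset2P; rewrite -Hfs fset22.
have Har2 : a \in r' by case: Ha => ->.
rewrite E in Hu.
have [Ep Er Eq] := region_unique Hu (etrans (esym E) E') Har Har2.
subst pre' r' post' st1 st2.
have Hur : uniq r.
  by move: Hu; rewrite flatten_cat cat_uniq => /and3P [_ _]; rewrite /= cat_uniq => /and3P [].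
have Hu1 : uniq (a :: X ++ b :: Y) by rewrite -Hr rot_uniq.
have Hu2 : uniq (a' :: X' ++ b' :: Y') by rewrite -Hr' rot_uniq.
have nb : forall (c d : label) U V, uniq (c :: U ++ d :: V) -> d \notin U /\ c \notin V.
  move=> c d U V; rewrite cons_uniq => /andP [H1 H2]; split.
    move: H2; rewrite cat_uniq => /and3P [_ /hasPn H _].
    by have := H d (mem_head _ _).
  by apply: contra H1 => HcV; rewrite mem_cat inE HcV !orbT.
case: Ha => Ha.
  subst a'.
  have Hbb : b = b' by case: Hb => // Hb; rewrite Hb eqxx in Hab.
  subst b'.
  have := rot_head Hur Hr; rewrite (rot_head Hur Hr') => -[].
  have [h1 _] := nb _ _ _ _ Hu1; have [h2 _] := nb _ _ _ _ Hu2.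
  by move=> /(split_first h2 h1) [-> ->].
subst b'.
have Hbb : b = a' by case: Hb => // Hb; rewrite Hb eqxx in Hab.
subst a'.
have Hr3 : rot (size (a :: X)) (rot k r) = b :: Y ++ a :: X by rewrite Hr -cat_cons rot_size_cat.
rewrite rot_rot_add in Hr3.
have Hu3 : uniq (b :: Y ++ a :: X) by rewrite -Hr3 rot_uniq.
have := rot_head Hur Hr3; rewrite (rot_head Hur Hr') => -[].
have [h1 _] := nb _ _ _ _ Hu3; have [h2 _] := nb _ _ _ _ Hu2.
move=> /(split_first h2 h1) [-> ->].
apply/permP => p; rewrite !count_cat /=; lia.
Qed.



Definition x0 := Arm 0.
Definition mkX (r : seq label) (i j : nat) := take (j - i.+1) (drop i.+1 r).
Definition mkY (r : seq label) (i j : nat) := drop j.+1 r ++ take i r.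
Definition mk (r : seq label) (ij : nat * nat) : {fset label} * state :=
  let a := nth x0 r ij.1 in let b := nth x0 r ij.2 in
  ([fset a; b]%fset, [:: New a b :: mkX r ij.1 ij.2; New b a :: mkY r ij.1 ij.2]).
Definition prs (k : nat) := [seq (i, j) | i <- iota 0 k, j <- iota i.+1 (k - i.+1)].
Definition mvr (r : seq label) := [seq mk r ij | ij <- prs (size r)].
Fixpoint mvs (st : state) : seq ({fset label} * state) :=
  match st with
  | [::] => [::]
  | r :: st' => [seq (p.1, p.2 ++ st') | p <- mvr r] ++ [seq (p.1, r :: p.2) | p <- mvs st']
  end.

Lemma mem_prs k i j : ((i, j) \in prs k) = (i < j) && (j < k).
Proof.
apply/allpairsPdep/andP.
  case=> x [y [Hx Hy [-> ->]]]; move: Hx Hy; rewrite !mem_iota; lia.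
move=> [Hij Hjk]; exists i, j; split => //; rewrite mem_iota; lia.
Qed.

Lemma prs_uniq k : uniq (prs k).
Proof.
rewrite /prs; elim: (iota 0 k) (iota_uniq 0 k) => [//|x s IH] /= /andP [Hx Hs].
rewrite cat_uniq IH // andbT; apply/andP; split.
  by rewrite map_inj_uniq ?iota_uniq // => y z [].
apply/hasPn => p /allpairsPdep [y [z [Hy _ ->]]].
apply/mapP => -[w _ [E _]]; by move: Hx; rewrite -E Hy.
Qed.

Lemma mk_rot r i j : i < j < size r ->
  rot i r = nth x0 r i :: mkX r i j ++ nth x0 r j :: mkY r i j.
Proof.
move=> /andP [Hij Hjr].
rewrite /rot /mkX /mkY (drop_nth x0 (ltn_trans Hij Hjr)) /=; congr (_ :: _).
rewrite -{1}(cat_take_drop (j - i.+1) (drop i.+1 r)) -catA; congr (_ ++ _).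
rewrite drop_drop subnK // (drop_nth x0 Hjr) //.
Qed.

Lemma mvr_step (r : seq label) post p : uniq r -> p \in mvr r ->
  step (r :: post) p.1 (p.2 ++ post).
Proof.
move=> Hu /mapP [[i j] Hij ->]; rewrite mem_prs in Hij.
exists [::], post, r, (nth x0 r i), (nth x0 r j), (mkX r i j), (mkY r i j), i.
split => //; first exact: mk_rot.
move/andP: Hij => [H1 H2]; rewrite nth_uniq ?(ltn_trans H1 H2) //; lia.
Qed.

Lemma mvs_step st p : uniq (flatten st) -> p \in mvs st -> step st p.1 p.2.
Proof.
elim: st p => [//|r st IH] p /= Hu; move: (Hu); rewrite cat_uniq => /and3P [Hr _ Hst].
rewrite mem_cat => /orP [] /mapP [q Hq ->] /=.
  exact: mvr_step.
have [pre [post [r' [a [b [X [Y [k [E Hr' Hab Hm E']]]]]]]]] := IH q Hst Hq.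
exists (r :: pre), post, r', a, b, X, Y, k; split => //; by rewrite ?E ?E'.
Qed.

Lemma mvs_complete st m st' : step st m st' -> exists s, (m, s) \in mvs st.
Proof.
case=> pre [post [r [a [b [X [Y [k [-> Hr Hab -> _]]]]]]]].
elim: pre => [|r0 pre [s Hs]] /=; last first.
  by exists (r0 :: s); rewrite mem_cat; apply/orP; right; apply/mapP; exists ([fset a; b]%fset, s).
have Har : a \in r by rewrite -(mem_rot k) Hr inE eqxx.
have Hbr : b \in r by rewrite -(mem_rot k) Hr inE mem_cat inE eqxx !orbT.
have Hne : index a r != index b r.
  by apply: contra Hab => /eqP E; rewrite -(nth_index x0 Har) -(nth_index x0 Hbr) E.
have [i [j [Hij E]]] : exists i j, [/\ (i, j) \in prs (size r) & [fset nth x0 r i; nth x0 r j]%fset = [fset a; b]%fset].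
  case: (ltnP (index a r) (index b r)) => H.
    exists (index a r), (index b r); rewrite mem_prs H index_mem Hbr !nth_index //.
  exists (index b r), (index a r); rewrite mem_prs index_mem Har !nth_index // fsetUC; split => //.
  by rewrite ltn_neqAle eq_sym Hne H.
exists ((mk r (i, j)).2 ++ post); rewrite mem_cat; apply/orP; left.
apply/mapP; exists (mk r (i, j)); last by rewrite /= E.
by apply/mapP; exists (i, j).
Qed.

Lemma nthI (r : seq label) i i' : uniq r -> i < size r -> i' < size r ->
  nth x0 r i = nth x0 r i' -> i = i'.
Proof. by move=> Hu Hi Hi' /eqP; rewrite nth_uniq // => /eqP. Qed.

Lemma pair_inj (r : seq label) (i j i' j' : nat) : uniq r -> (i < j) && (j < size r) -> (i' < j') && (j' < size r) ->
  [fset nth x0 r i; nth x0 r j]%fset = [fset nth x0 r i'; nth x0 r j']%fset -> i = i' /\ j = j'.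
Proof.
move=> Hu /andP [H1 H2] /andP [H1' H2'] E.
have Hi : nth x0 r i \in [fset nth x0 r i'; nth x0 r j']%fset by rewrite -E fset21.
have Hj : nth x0 r j \in [fset nth x0 r i'; nth x0 r j']%fset by rewrite -E fset22.
have si : i < size r by lia.
have si' : i' < size r by lia.
case/fset2P: Hi => [/(nthI Hu si si') Ei | /(nthI Hu si H2') Ei];
  case/fset2P: Hj => [/(nthI Hu H2 si') Ej | /(nthI Hu H2 H2') Ej]; lia.
Qed.

Lemma mvr_fst_uniq r : uniq r -> uniq (map fst (mvr r)).
Proof.
move=> Hu; rewrite /mvr -map_comp map_inj_in_uniq ?prs_uniq //.
move=> [i j] [i' j']; rewrite !mem_prs => H H' /= E.
by have [-> ->] := pair_inj Hu H H' E.
Qed.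

Lemma mvr_mem r p x : p \in mvr r -> x \in p.1 -> x \in r.
Proof.
move=> /mapP [[i j] Hij ->]; rewrite mem_prs in Hij; move/andP: Hij => [H1 H2].
by move=> /fset2P [] ->; apply: mem_nth => //; apply: ltn_trans H1 H2.
Qed.

Lemma mvr_has r p : p \in mvr r -> exists2 x, x \in p.1 & x \in r.
Proof.
move=> /mapP [[i j] Hij ->]; rewrite mem_prs in Hij; exists (nth x0 r i); first exact: fset21.
move/andP: Hij => [H1 H2]; apply: mem_nth; apply: ltn_trans H1 H2.
Qed.

Lemma mvs_mem st p x : p \in mvs st -> x \in p.1 -> x \in flatten st.
Proof.
elim: st p => [//|r st IH] p /=; rewrite mem_cat => /orP [] /mapP [q Hq ->] /= Hx; rewrite mem_cat.
  by rewrite (mvr_mem Hq Hx).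
by rewrite (IH q Hq Hx) orbT.
Qed.

Lemma mvs_fst_uniq st : uniq (flatten st) -> uniq (map fst (mvs st)).
Proof.
elim: st => [//|r st IH] /= Hu; move: (Hu); rewrite cat_uniq => /and3P [Hr Hd Hst].
rewrite map_cat.
have -> : map fst [seq (p.1, p.2 ++ st) | p <- mvr r] = map fst (mvr r) by rewrite -map_comp.
have -> : map fst [seq (p.1, r :: p.2) | p <- mvs st] = map fst (mvs st) by rewrite -map_comp.
rewrite cat_uniq.
rewrite mvr_fst_uniq // IH // andbT.
apply/hasPn => m /mapP [q Hq ->]; apply/mapP => -[q' Hq' E].
have [x Hx Hxr] := mvr_has Hq'.
have Hx2 := mvs_mem Hq (eq_ind _ (fun s => x \in s) Hx _ (esym E)).
by move/hasPn: Hd => /(_ x Hx2); rewrite Hxr.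
Qed.



Definition G (st : state) : rat := (\prod_(r <- st) g (size r))%R.
Definition F (st : state) : rat := (((mu st)`!)%:R * G st)%R.

Lemma sum_iota n (f : nat -> rat) : (\sum_(i <- iota 0 n) f i = \sum_(i < n) f i)%R.
Proof. by rewrite -(big_mkord xpredT) /index_iota subn0. Qed.

Lemma dsum (phi : nat -> rat) m :
  (\sum_(i < m.+1) \sum_(d < m - i) phi d = \sum_(d < m) (m - d)%:R * phi d)%R.
Proof.
elim: m => [|m IH]; first by rewrite big_ord_recl big_ord0 !big_ord0 addr0.
rewrite big_ord_recl subn0 /=.
rewrite [X in (_ + X = _)%R](eq_bigr (fun i : 'I_m.+1 => \sum_(d < m - i) phi d)%R); last by move=> i _; rewrite /bump leq0n add1n subSS.
rewrite IH [in RHS]big_ord_recr [in LHS]big_ord_recr /= subSnn mul1r addrAC -big_split /=.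
congr (_ + _)%R; apply: eq_bigr => i _.
have -> : (m.+1 - i = (m - i) + 1)%N by have := ltn_ord i; lia.
by rewrite natrD; ring.
Qed.

Lemma G_cat s t : G (s ++ t) = (G s * G t)%R.
Proof. by rewrite /G big_cat. Qed.

Lemma G_mk r i j : i < j < size r -> G (mk r (i, j)).2 = (g (j - i) * g (size r - (j - i)))%R.
Proof.
move=> /andP [H1 H2].
rewrite /G /mk /= !big_cons big_nil mulr1 /mkX /mkY /= size_cat !size_takel ?size_drop //; try lia.
by congr (g _ * g _)%R; lia.
Qed.

Lemma mvr_sum r : (\sum_(p <- mvr r) G p.2 = ((size r).-1)%:R * g (size r))%R.
Proof.
rewrite big_map /prs big_allpairs_dep /=.
set k := size r.
rewrite (eq_bigr (fun i => \sum_(d < k - i.+1) (g d.+1 * g (k - d.+1)))%R); last first.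
  move=> i _.
  rewrite big_seq_cond (eq_bigr (fun j => g (j - i) * g (k - (j - i)))%R); last first.
    move=> j /andP [Hj _]; rewrite mem_iota in Hj; apply: G_mk; lia.
  have Eio : forall a n, iota a n = map (addn a) (iota 0 n) by move=> a n; rewrite -iotaDl addn0.
  rewrite -big_seq_cond Eio big_map -(sum_iota (k - i.+1) (fun d => (g d.+1 * g (k - d.+1))%R)); apply: eq_bigr => d _.
  by have -> : (i.+1 + d - i = d.+1)%N by lia.
rewrite sum_iota.
case: k => [|m]; first by rewrite big_ord0 mul0r.
rewrite (eq_bigr (fun i : 'I_m.+1 => \sum_(d < m - i) (g d.+1 * g (m - d)))%R); last first.
  by move=> i _; apply: eq_bigr => d _; have -> : (m.+1 - d.+1 = m - d)%N by lia.
by rewrite (dsum (fun d => g d.+1 * g (m - d))%R m) /= -gsum; apply: eq_bigr => d _; rewrite mulrA.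
Qed.

Lemma mvs_sum st : (\sum_(p <- mvs st) G p.2 = (mu st)%:R * G st)%R.
Proof.
elim: st => [|r st IH] /=; first by rewrite big_nil /mu big_nil mul0r.
rewrite big_cat /= [X in (X + _)%R]big_map [X in (_ + X)%R]big_map.
rewrite [X in (X + _)%R](eq_bigr (fun p => G p.2 * G st)%R); last by move=> p _; rewrite /= G_cat.
rewrite [X in (_ + X)%R](eq_bigr (fun p => g (size r) * G p.2)%R); last by move=> p _; rewrite /= /G big_cons.
rewrite -mulr_suml -mulr_sumr mvr_sum IH /mu big_cons natrD /G big_cons -/(G st).
rewrite -/(mu st). ring.
Qed.



Fixpoint lines (f : nat) (st : state) : seq (seq {fset label}) :=
  match f with
  | 0 => [:: [::]]
  | f'.+1 => if mvs st is [::] then [:: [::]]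
             else flatten [seq [seq p.1 :: l | l <- lines f' p.2] | p <- mvs st]
  end.

Lemma g_gt0 k : (0 < g k)%R.
Proof.
rewrite /g divr_gt0 // ltr0n ?fact_gt0 //.
by rewrite expn_gt0; case: k.
Qed.

Lemma G_gt0 st : (0 < G st)%R.
Proof.
rewrite /G; elim: st => [|r st IH]; rewrite ?big_nil ?big_cons; first exact: ltr01.
exact: mulr_gt0 (g_gt0 _) IH.
Qed.

Lemma mu0_G st : mu st = 0 -> G st = 1%R.
Proof.
elim: st => [|r st IH]; first by rewrite /G big_nil.
rewrite /mu big_cons -/(mu st) => H.
have H1 : (size r).-1 = 0 by lia.
have H2 : mu st = 0 by lia.
rewrite /G big_cons -/(G st) IH // mulr1.
by case: r {H} H1 => [|x [|y r]] //= _; rewrite /g /=.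
Qed.

Lemma uniq_flat (L : seq ({fset label} * state)) (h : state -> seq (seq {fset label})) :
  uniq (map fst L) -> (forall p, p \in L -> uniq (h p.2)) ->
  uniq (flatten [seq [seq p.1 :: l | l <- h p.2] | p <- L]).
Proof.
elim: L => [//|p L IH] /= /andP [Hp HL] Hu.
rewrite cat_uniq IH // ?andbT; last by move=> q Hq; apply: Hu; rewrite inE Hq orbT.
rewrite map_inj_uniq ?Hu ?mem_head //=; last by move=> x y [].
apply/hasPn => l /flattenP [s /mapP [q Hq ->] /mapP [l' _ ->]].
apply/mapP => -[l'' _ [E _]].
by move: Hp; rewrite -E (map_f fst Hq).
Qed.

Lemma size_flat (L : seq ({fset label} * state)) (h : state -> seq (seq {fset label})) :
  ((size (flatten [seq [seq p.1 :: l | l <- h p.2] | p <- L]))%:R = \sum_(p <- L) (size (h p.2))%:R :> rat)%R.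
Proof.
elim: L => [|p L IH] /=; first by rewrite big_nil.
by rewrite size_cat natrD size_map IH big_cons.
Qed.

Lemma main M : forall st, WF st -> mu st = M ->
  [/\ uniq (lines M st), (forall l, l \in lines M st <-> line_from st l)
    & ((size (lines M st))%:R = F st :> rat)%R].
Proof.
elim: M => [|M IH] st Hwf Hmu.
  have Hn : mvs st = [::].
    case E: (mvs st) => [//|p L].
    have Hp : p \in mvs st by rewrite E mem_head.
    have := step_mu (mvs_step (proj1 Hwf) Hp); lia.
  have Ht : terminal st.
    by move=> m st' /mvs_complete [s]; rewrite Hn.
  split => //=.
    case=> [|m l]; split.
    + by move=> _; apply: Ht.
    + by rewrite mem_seq1.
    + by rewrite mem_seq1.
    + by case=> st' [Hs _]; case: (Ht _ _ Hs).
  by rewrite /F Hmu mu0_G // mulr1.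
have Hne : mvs st != [::].
  apply/eqP => E; have := mvs_sum st; rewrite E big_nil Hmu => /esym /eqP.
  by rewrite mulf_eq0 pnatr_eq0 (negbTE (lt0r_neq0 (G_gt0 st))).
have Hl : lines M.+1 st = flatten [seq [seq p.1 :: l | l <- lines M p.2] | p <- mvs st].
  by rewrite /=; case: (mvs st) Hne.
have HIH : forall p, p \in mvs st -> [/\ uniq (lines M p.2),
    (forall l, l \in lines M p.2 <-> line_from p.2 l)
    & ((size (lines M p.2))%:R = F p.2 :> rat)%R] /\ mu p.2 = M.
  move=> p Hp; have Hs := mvs_step (proj1 Hwf) Hp.
  have Hm : mu p.2 = M by have := step_mu Hs; lia.
  by split => //; apply: IH => //; apply: step_WF Hwf Hs.
rewrite Hl; split.
- apply: uniq_flat; first exact: mvs_fst_uniq (proj1 Hwf).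
  by move=> p /HIH [[]].
- move=> l; split.
    move=> /flattenP [s /mapP [p Hp ->] /mapP [l' Hl' ->]] /=.
    exists p.2; split; first exact: mvs_step (proj1 Hwf) Hp.
    by have [[_ H _] _] := HIH p Hp; apply/H.
  case: l => [|m l] /=.
    move=> Ht; case/eqP: Hne; case E: (mvs st) => [//|p L].
    have Hp : p \in mvs st by rewrite E mem_head.
    by case: (Ht _ _ (mvs_step (proj1 Hwf) Hp)).
  case=> st' [Hs Hl'].
  have [s Hms] := mvs_complete Hs.
  have Hs2 := mvs_step (proj1 Hwf) Hms.
  have Hp := step_det Hwf Hs Hs2.
  have Hl2 := line_perm Hp Hl'.
  apply/flattenP; exists [seq (m, s).1 :: l0 | l0 <- lines M (m, s).2]; first exact: map_f.
  apply: map_f; have [[_ H _] _] := HIH _ Hms; exact/H.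
- rewrite size_flat (eq_big_seq (fun p => F p.2)); last first.
    by move=> p /HIH [[_ _ ->] _].
  rewrite (eq_big_seq (fun p => (M`!)%:R * G p.2)%R); last first.
    by move=> p /HIH [_ Hm]; rewrite /F Hm.
  rewrite -mulr_sumr mvs_sum /F Hmu factS natrM; ring.
Qed.

Lemma WF_init n : WF (init_state n).
Proof.
rewrite /WF /init_state /= cats0; split.
  by rewrite map_inj_uniq ?iota_uniq // => x y [].
by move=> u v _ /mapP [i _ ->].
Qed.

Lemma mu_init n : mu (init_state n) = n.-1.
Proof. by rewrite /mu /init_state big_cons big_nil size_map size_iota addn0. Qed.

Theorem theorem3 (n : nat) : 1 <= n ->
  exists s : seq (seq {fset label}),
    [/\ uniq s,
        (forall l, l \in s <-> complete_line n l) &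
        size s = n ^ (n - 2)].
Proof.
move=> Hn.
have [Hu Hm Hs] := main (WF_init n) (mu_init n).
exists (lines n.-1 (init_state n)); split => //.
apply/eqP; rewrite -(eqr_nat rat) Hs /F mu_init /G /init_state big_cons big_nil mulr1 size_map size_iota.
case: n Hn {Hu Hm Hs} => [//|k] _ /=; rewrite /g /= factS natrM.
have h1 : (k.+1%:R : rat) != 0%R by rewrite pnatr_eq0.
have h2 : (k`!%:R : rat) != 0%R by rewrite pnatr_eq0 -lt0n fact_gt0.
case: k h1 h2 => [|k] h1 h2; first by rewrite /= !mul1r invr1 ?mulr1.
rewrite ?subSS ?subn0 expnS natrM.
apply/eqP; field. rewrite h2 /=; move: h1; rewrite -!natr1 -addrA; congr (_ != _); ring.
Qed.
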